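(* Let $G$ be an undirected, weighted, connected graph on vertices $1,\dots,n$, and let $H$ be either its adjacency matrix or its Laplacian matrix. For real $t$ let $p(t)=|\langle s|e^{itH}|r\rangle|^2$ be the fidelity of state transfer from a sender vertex $s$ to a receiver vertex $r$. Suppose there is perfect state transfer from $s$ to $r$ at time $t_0$, i.e. $p(t_0)=1$. Let $\lambda_1$ and $\lambda_n$ denote the smallest and largest eigenvalues of $H$, and let $h\in\mathbb{R}$ satisfy $|h|<\frac{\pi}{\lambda_n-\lambda_1}$. Then \[ p(t_0+h)\ \ge\ \frac14\left|e^{ih\lambda_1}+e^{ih\lambda_n}\right|^2 . \]
   Context: For a weighted graph with edge weights $w(j,k)$, the adjacency matrix $A=[a_{jk}]$ has $a_{jk}=w(j,k)$ if $j,k$ are adjacent and $a_{jk}=0$ otherwise; the Laplacian is $L=R-A$ where $R$ is the diagonal matrix of row sums of $A$. $\{|1\rangle,\dots,|n\rangle\}$ is the standard basis of $\mathbb{C}^n$, so $\langle s|e^{itH}|r\rangle$ is the $(s,r)$ entry of $e^{itH}$. *)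

(* Defs.v *)
From HB Require Import structures.
From mathcomp Require Import all_boot all_order all_algebra.
From mathcomp Require Import all_classical all_reals all_analysis.
From mathcomp Require Import complex.
Set Implicit Arguments. Unset Strict Implicit. Unset Printing Implicit Defensive.
Import Order.TTheory GRing.Theory Num.Theory.
Import numFieldTopology.Exports numFieldNormedType.Exports.
Local Open Scope ring_scope.
Local Open Scope classical_set_scope.

(* Topology on the complex numbers R[i] (R real closed): the metric topology
   induced by the complex modulus, as for any numFieldType. *)
HB.instance Definition _ (R : rcfType) := PseudoPointedMetric.copy R[i] (R[i])^o.

Section Defs.
Variables (R : realType) (n : nat).

Definition weighted_graph (e : rel 'I_n) (w : 'I_n -> 'I_n -> R) : Prop :=
  [/\ forall j k, e j k = e k j,
      forall j, ~~ e j j,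
      forall j k, w j k = w k j
    & forall j k, e j k -> 0 < w j k].

Definition connected_graph (e : rel 'I_n) : Prop :=
  forall j k : 'I_n, connect e j k.

Definition adjacency_mx (e : rel 'I_n) (w : 'I_n -> 'I_n -> R) : 'M[R]_n :=
  \matrix_(j, k) (if e j k then w j k else 0).

Definition laplacian_mx (e : rel 'I_n) (w : 'I_n -> 'I_n -> R) : 'M[R]_n :=
  diag_mx (\row_j (\sum_k adjacency_mx e w j k)) - adjacency_mx e w.

Definition cmx (H : 'M[R]_n) : 'M[R[i]]_n := map_mx (fun x => x%:C%C) H.

Definition expmx (M : 'M[R[i]]_n) : 'M[R[i]]_n :=
  \matrix_(j, k)
    lim ((fun N : nat => (\sum_(m < N) (m`!%:R)^-1 *: (M ^+ m)) j k) @ \oo).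

Definition expi (x : R) : R[i] := (cos x +i* sin x)%C.

Definition fidelity (H : 'M[R]_n) (s r : 'I_n) (t : R) : R :=
  Normc.normc (expmx (('i%C * t%:C%C) *: cmx H) s r) ^+ 2.

End Defs.

(* Main.v *)
Require Import Defs.
From HB Require Import structures.
From mathcomp Require Import all_boot all_order all_algebra.
From mathcomp Require Import all_classical all_reals all_analysis.
From mathcomp Require Import complex.
Import Order.TTheory GRing.Theory Num.Theory.
Import numFieldTopology.Exports numFieldNormedType.Exports.
Local Open Scope ring_scope.
Local Open Scope classical_set_scope.
From mathcomp Require Import ring lra.

Section S.
Variable R : realType.
Local Open Scope complex_scope.
Local Notation C := (R[i]).

Lemma term_expi (x : R) (m : nat) :
  (m`!%:R)^-1 * ('i * x%:C) ^+ m =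
  (cos_coeff x m)%:C + 'i * (sin_coeff x m)%:C :> R[i].
Proof.
have [k [->|->]] : exists k, m = k.*2 \/ m = k.*2.+1.
  exists m./2; rewrite -{1 3}[m]odd_double_half; case: odd; [right|left] => //.
- rewrite sin_coeff_even rmorph0 mulr0 addr0 /cos_coeff /=.
  rewrite odd_double doubleK /= mul1r -exprnP.
  rewrite exprMn -rmorphXn /= -mul2n exprM sqr_i.
  rewrite !rmorphM /= fmorphV /= rmorph_nat !rmorphXn /= rmorphN1.
  by rewrite mulrC.
- rewrite cos_coeff_odd rmorph0 add0r /sin_coeff /=.
  rewrite odd_double /= doubleK mul1r.
  rewrite exprMn -rmorphXn /= exprS -mul2n exprM sqr_i.
  rewrite !rmorphM /= fmorphV /= rmorph_nat !rmorphXn /= rmorphN1.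
  by rewrite mulrC !mulrA.
Qed.

Lemma normC_real (x : R) : `|(x%:C : R[i])| = (`|x|)%:C.
Proof. by rewrite [LHS]/Num.norm /= expr0n /= addr0 sqrtr_sqr. Qed.

Lemma cvg_realC (u : nat -> R) (l : R) :
  u @ \oo --> l -> (fun N => (u N)%:C : (R[i])^o) @ \oo --> (l%:C : (R[i])^o).
Proof.
move=> /cvgrPdist_lt ul; apply/cvgrPdist_lt => eps eps0.
have := eps0; rewrite ltcE /= => /andP[/eqP Ie Re0].
have -> : eps = (complex.Re eps)%:C by move: Ie; case: (eps) => a b /= ->.
near=> N.
have : `|l - u N| < complex.Re eps by near: N; exact: ul.
by rewrite -rmorphB /= normC_real ltcR.
Unshelve. all: end_near.
Qed.

Lemma expiE (x : R) : expi x = (cos x)%:C + 'i * (sin x)%:C.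
Proof. by rewrite /expi; simpc. Qed.

Lemma expi_series (x : R) :
  (fun N => \sum_(m < N) (m`!%:R)^-1 * ('i * x%:C) ^+ m : (R[i])^o) @ \oo -->
  (expi x : (R[i])^o).
Proof.
have -> : (fun N => \sum_(m < N) (m`!%:R)^-1 * ('i * x%:C) ^+ m : (R[i])^o) =
  (fun N => (series (cos_coeff x) N)%:C + 'i * (series (sin_coeff x) N)%:C).
  apply/funext => N; rewrite /series /= !big_mkord.
  rewrite !rmorph_sum /= mulr_sumr -big_split /=.
  by apply: eq_bigr => m _; rewrite term_expi.
rewrite expiE; apply: cvgD; first apply: cvg_realC.
  by rewrite cos.unlock; exact: is_cvg_series_cos_coeff.
apply: cvgMl_tmp; apply: cvg_realC.
by rewrite sin.unlock; exact: is_cvg_series_sin_coeff.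
Qed.

Lemma cvg_bigsum (I : finType) (f : I -> nat -> (R[i])^o) (a : I -> (R[i])^o) :
  (forall i, f i @ \oo --> a i) ->
  (fun N => \sum_i f i N) @ \oo --> \sum_i a i.
Proof.
move=> fa.
have -> : (fun N => \sum_i f i N) = \sum_i f i.
  by apply/funext => N; rewrite fct_sumE.
apply: (big_ind2 (fun (g : nat -> (R[i])^o) (b : (R[i])^o) => g @ \oo --> b)).
- exact: cvg_cst.
- by move=> g1 b1 g2 b2; apply: cvgD.
- by move=> i _; apply: fa.
Qed.

Section N.
Variable n : nat.
Local Notation C := (R[i]).

Lemma entry3 (X Y : 'M[C]_n) (v : 'rV[C]_n) j k :
  (X *m diag_mx v *m Y) j k = \sum_l X j l * v 0 l * Y l k.
Proof.
rewrite mxE; apply: eq_bigr => l _; by rewrite mul_mx_diag mxE.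
Qed.

Lemma conj_diag_pow (P : 'M[C]_n) (v : 'rV[C]_n) m : P \in unitmx ->
  (invmx P *m diag_mx v *m P) ^+ m = invmx P *m diag_mx (\row_l (v 0 l) ^+ m) *m P.
Proof.
move=> Pu; elim: m => [|m IH].
  have -> : \row_l (v 0 l) ^+ 0 = const_mx 1 by apply/rowP => l; rewrite !mxE expr0.
  by rewrite expr0 diag_const_mx mulmx1 mulVmx.
rewrite exprS -mulmxE IH !mulmxA -[_ *m P *m invmx P]mulmxA mulmxV // mulmx1.
by rewrite -[_ *m diag_mx v *m _]mulmxA mulmx_diag; congr (_ *m diag_mx _ *m _);
   apply/rowP => l; rewrite !mxE exprS.
Qed.


Lemma partial_sum_entry (P : 'M[C]_n) (v : 'rV[C]_n) (c : C) N j k :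
  P \in unitmx ->
  (\sum_(m < N) (m`!%:R)^-1 *: ((c *: (invmx P *m diag_mx v *m P)) ^+ m)) j k
  = \sum_l invmx P j l * (\sum_(m < N) (m`!%:R)^-1 * (c * v 0 l) ^+ m) * P l k.
Proof.
move=> Pu.
have -> : c *: (invmx P *m diag_mx v *m P) =
          invmx P *m diag_mx (\row_l (c * v 0 l)) *m P.
  rewrite scalemxAl scalemxAr; congr (_ *m _ *m _).
  by apply/matrixP => a b; rewrite !mxE mulrnAr.
rewrite summxE.
under eq_bigr do rewrite mxE conj_diag_pow // entry3 mulr_sumr.
rewrite exchange_big /=; apply: eq_bigr => l _.
rewrite mulr_sumr mulr_suml; apply: eq_bigr => m _.
by rewrite !mxE !mulrA [_^-1 * _]mulrC.
Qed.

Lemma expmx_entry (P : 'M[C]_n) (v : 'rV[C]_n) (d : 'I_n -> R) (t : R) j k :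
  P \in unitmx -> (forall l, v 0 l = (d l)%:C) ->
  expmx (('i * t%:C) *: (invmx P *m diag_mx v *m P)) j k =
  \sum_l invmx P j l * expi (t * d l) * P l k.
Proof.
move=> Pu vd; rewrite mxE.
apply: (@cvg_lim _ (@norm_hausdorff _ (C^o))) => //.
have -> : (fun N : nat => (\sum_(m < N) (m`!%:R)^-1 *:
     (('i * t%:C) *: (invmx P *m diag_mx v *m P)) ^+ m) j k) =
  (fun N => \sum_l invmx P j l * (\sum_(m < N) (m`!%:R)^-1 * ('i * (t * d l)%:C) ^+ m) * P l k).
  apply/funext => N; rewrite partial_sum_entry //.
  by apply: eq_bigr => l _; rewrite vd rmorphM /= mulrA.
apply: cvg_bigsum => l.
apply: cvgMr_tmp; apply: cvgMl_tmp.
exact: expi_series.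
Qed.

End N.

Lemma expiD (x y : R) : expi (x + y) = expi x * expi y.
Proof. by rewrite /expi /= cosD sinD; simpc; congr (_ +i* _); ring. Qed.

Lemma normc_expi (x : R) : Normc.normc (expi x) = 1.
Proof. by rewrite /expi /= cos2Dsin2 sqrtr1. Qed.

Lemma expi_conj (x : R) : expi x * (expi x)^* = 1.
Proof.
rewrite -normCK; change `|expi x| with (Normc.normc (expi x))%:C.
by rewrite normc_expi expr1n.
Qed.

Lemma normc_real (x : R) : Normc.normc (x%:C) = `|x|.
Proof. by rewrite /= expr0n /= addr0 sqrtr_sqr. Qed.

Lemma Re_sum (I : finType) (F : I -> C) : complex.Re (\sum_i F i) = \sum_i complex.Re (F i).
Proof. by apply: (big_morph (@complex.Re R)) => // -[a b] [c d]. Qed.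

Lemma Re_le_normc (z : C) : complex.Re z <= Normc.normc z.
Proof.
case: z => a b /=; apply: (le_trans (ler_norm a)).
by rewrite -sqrtr_sqr ler_sqrt ?lerDl ?sqr_ge0 // addr_ge0 ?sqr_ge0.
Qed.

Lemma expiNs (x : R) : expi (- x) + expi x = (cos x *+ 2)%:C.
Proof. by rewrite /expi cosN sinN; simpc; rewrite addNr -mulr2n. Qed.

Lemma cos_anti (x y : R) : 0 <= x -> x <= y -> y <= pi -> cos y <= cos x.
Proof.
move=> x0 xy ypi; rewrite leNgt ltr_cos ?in_itv /= ?x0 ?(le_trans xy) ?(le_trans x0 xy) //.
by rewrite -leNgt.
Qed.

Lemma normc_ge0 (z : C) : 0 <= Normc.normc z.
Proof. by case: z => a b; exact: sqrtr_ge0. Qed.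

Lemma normC_normc (z : C) : `|z| = (Normc.normc z)%:C.
Proof. by []. Qed.

Lemma mul_conj_normc (z : C) : z * z^* = (Normc.normc z ^+ 2)%:C.
Proof. by rewrite -normCK normC_normc rmorphXn. Qed.

Lemma core (n : nat) (a b : 'I_n -> C) (d : 'I_n -> R) (t0 h l1 ln : R) :
  \sum_l a l * (a l)^* = 1 -> \sum_l b l * (b l)^* = 1 ->
  (forall l, l1 <= d l <= ln) -> l1 <= ln -> `|h| * (ln - l1) < pi ->
  Normc.normc (\sum_l a l * expi (t0 * d l) * b l) ^+ 2 = 1 ->
  4^-1 * Normc.normc (expi (h * l1) + expi (h * ln)) ^+ 2 <=
  Normc.normc (\sum_l a l * expi ((t0 + h) * d l) * b l) ^+ 2.
Proof.
move=> Ha Hb Hd l1n Hpi Hfid.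
set g := \sum_l a l * expi (t0 * d l) * b l.
have g1 : g * g^* = 1 by rewrite mul_conj_normc Hfid.
have fb : forall l, expi (t0 * d l) * b l = g * (a l)^*.
  pose z l := g * (a l)^* - expi (t0 * d l) * b l.
  have zs : \sum_l z l * (z l)^* = 0.
    have -> : \sum_l z l * (z l)^* = \sum_l (g * g^* * (a l * (a l)^*)
       - g * (a l * expi (t0 * d l) * b l)^*
       - g^* * (a l * expi (t0 * d l) * b l) + b l * (b l)^*).
      apply: eq_bigr => l _; rewrite /z !rmorphB !rmorphM /= conjCK.
      have := expi_conj (t0 * d l); set f := expi _ => ef.
      apply/eqP; rewrite -subr_eq0; apply/eqP.
      transitivity ((f * f^* - 1) * (b l * (b l)^*)); first by ring.
      by rewrite ef subrr mul0r.
    rewrite big_split /= !sumrB -!mulr_sumr -rmorph_sum /= Ha Hb -/g.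
    rewrite [g^* * g]mulrC g1; ring.
  move=> l; have := psumr_eq0P (fun i _ => mul_conjC_ge0 (z i)) zs (isT : true).
  move=> /(_ l); rewrite -normCK => /eqP; rewrite sqrf_eq0 normr_eq0 subr_eq0.
  by move/eqP <-.
pose w l := Normc.normc (a l) ^+ 2.
have w0 : forall l, 0 <= w l by move=> l; rewrite /w sqr_ge0.
have w1 : \sum_l w l = 1.
  apply: (@complexI R); rewrite rmorph_sum rmorph1 /= -Ha.
  by apply: eq_bigr => l _; rewrite mul_conj_normc.
have e2 : \sum_l a l * expi ((t0 + h) * d l) * b l =
          g * \sum_l (w l)%:C * expi (h * d l).
  rewrite mulr_sumr; apply: eq_bigr => l _.
  rewrite mulrDl expiD -mulrA [expi (t0 * d l) * _]mulrC -mulrA fb /w.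
  rewrite -mul_conj_normc; ring.
have ng : Normc.normc g = 1.
  by apply/eqP; rewrite -sqrp_eq1 ?Hfid ?normc_ge0.
rewrite e2 Normc.normcM ng mul1r.
pose m := (l1 + ln) / 2; pose e := (ln - l1) / 2; pose th := `|h| * e.
have e0 : 0 <= e by rewrite /e divr_ge0 // subr_ge0.
have th0 : 0 <= th by rewrite /th mulr_ge0.
have thpi : th <= pi / 2.
  by rewrite /th /e mulrA ler_pM2r // ltW.
have pi0 : 0 < pi := pi_gt0 R.
have cth0 : 0 <= cos th.
  by apply: cos_ge0_pihalf; rewrite thpi andbT (le_trans _ th0) // oppr_le0 divr_ge0 // ltW.
have L : cos th <= Normc.normc (\sum_l (w l)%:C * expi (h * d l)).
  have -> : \sum_l (w l)%:C * expi (h * d l) =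
            expi (h * m) * \sum_l (w l)%:C * expi (h * (d l - m)).
    rewrite mulr_sumr; apply: eq_bigr => l _.
    by rewrite mulrCA -expiD; congr (_ * expi _); ring.
  rewrite Normc.normcM normc_expi mul1r.
  apply: le_trans (Re_le_normc _); rewrite Re_sum.
  have -> : \sum_l complex.Re ((w l)%:C * expi (h * (d l - m))) =
            \sum_l w l * cos (h * (d l - m)).
    by apply: eq_bigr => l _; rewrite /expi /=; simpc.
  apply: le_trans (_ : \sum_l w l * cos th <= _).
    by rewrite -mulr_suml w1 mul1r.
  apply: ler_sum => l _; apply: ler_wpM2l => //.
  rewrite -[cos (h * _)]cos_norm; apply: cos_anti => //.
    rewrite normrM /th ler_wpM2l // ler_norml /m /e.
    have := Hd l; move=> /andP[? ?]; apply/andP; split; lra.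
  apply: (le_trans thpi); rewrite ler_pdivrMr //; lra.
have R1 : Normc.normc (expi (h * l1) + expi (h * ln)) = 2 * cos th.
  have -> : expi (h * l1) + expi (h * ln) = expi (h * m) * (cos (h * e) *+ 2)%:C.
    rewrite -expiNs mulrDr -!expiD; congr (expi _ + expi _); rewrite /m /e; by field.
  rewrite Normc.normcM normc_expi mul1r normc_real.
  rewrite -cos_norm normrM [`|e|]ger0_norm // -/th ger0_norm ?mulr2n ?addr_ge0 //.
  by rewrite mulrDl mul1r.
rewrite R1.
have := normc_ge0 (\sum_l (w l)%:C * expi (h * d l)).
set N := Normc.normc _ => N0.
have -> : 4^-1 * (2 * cos th) ^+ 2 = cos th ^+ 2 by field.
by rewrite ler_pXn2r // ?nnegrE.
Qed.

Lemma main_aux (n : nat) (e : rel 'I_n)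
    (w : 'I_n -> 'I_n -> R) (H : 'M[R]_n) (s r : 'I_n) (t0 h l1 ln : R) :
  weighted_graph e w ->
  connected_graph e ->
  (H = adjacency_mx e w \/ H = laplacian_mx e w) ->
  fidelity H s r t0 = 1 ->
  eigenvalue H l1 -> eigenvalue H ln ->
  (forall a : R, eigenvalue H a -> l1 <= a <= ln) ->
  `|h| * (ln - l1) < pi ->
  fidelity H s r (t0 + h) >= 4^-1 * Normc.normc (expi (h * l1) + expi (h * ln)) ^+ 2.
Proof.
move=> [esym _ wsym _] _ HH Hf El1 Eln Hev Hpi.
have Hs : forall i j, H i j = H j i.
  move=> i j; have [->|nij] := eqVneq i j => //.
  have nji : j != i by rewrite eq_sym.
  by case: HH => ->; rewrite /laplacian_mx /adjacency_mx !mxE ?(negPf nij) ?(negPf nji) esym wsym.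
pose A := cmx H.
have Aherm : A \is hermsymmx.
  apply/is_hermitianmxP; rewrite expr0 scale1r; apply/matrixP => i j.
  by rewrite !mxE Hs; apply/eqP; rewrite eq_complex /= oppr0 !eqxx.
have Anorm := hermitian_normalmx Aherm.
pose P := spectralmx A; pose D := spectral_diag A.
have AE : A = invmx P *m diag_mx D *m P := elimT (@orthomx_spectralP _ _ A) Anorm.
have /mxOverP Dreal := hermitian_spectral_diag_real Aherm.
pose dl l := complex.Re (D 0 l).
have Dr : forall l, D 0 l = (dl l)%:C by move=> l; rewrite /dl RRe_real // Dreal.
have Pu : P \in unitmx := spectral_unit A.
have Pinv : forall j l, invmx P j l = (P l j)^*.
  by move=> j l; rewrite invmx_unitary ?spectral_unitarymx // !mxE.
have PP : forall j k, \sum_l invmx P j l * P l k = (1%:M : 'M[C]_n) j k.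
  by move=> j k; rewrite -(mulVmx Pu) mxE.
have fidE : forall t, fidelity H s r t =
    Normc.normc (\sum_l invmx P s l * expi (t * dl l) * P l r) ^+ 2.
  by move=> t; rewrite /fidelity -/A AE (@expmx_entry _ _ _ dl).
have Hd : forall l, l1 <= dl l <= ln.
  move=> l; apply: Hev.
  have : eigenvalue A (D 0 l).
    apply/eigenvalueP; exists (row l P).
      rewrite AE !mulmxA -!row_mul mulmxV // mul1mx mul_diag_mx.
      by apply/rowP => k; rewrite !mxE.
    apply/negP => /eqP Z.
    have : row l (P *m invmx P) = 0 by rewrite row_mul Z mul0mx.
    rewrite mulmxV // => /rowP /(_ l); rewrite !mxE eqxx /= => /eqP.
    by rewrite oner_eq0.
  rewrite !eigenvalue_root_char.
  have -> : A = map_mx (real_complex R) H by [].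
  by rewrite -map_char_poly Dr fmorph_root.
have l1n : l1 <= ln by have /andP[] := Hev ln Eln.
have Ha : \sum_l invmx P s l * (invmx P s l)^* = 1.
  transitivity (\sum_l invmx P s l * P l s).
    by apply: eq_bigr => l _; rewrite Pinv conjCK.
  by rewrite PP mxE eqxx.
have Hb : \sum_l P l r * (P l r)^* = 1.
  transitivity (\sum_l invmx P r l * P l r).
    by apply: eq_bigr => l _; rewrite Pinv mulrC.
  by rewrite PP mxE eqxx.
rewrite !fidE in Hf *.
exact: core.
Qed.
End S.

Theorem theorem2p1 (R : realType) (n : nat) (e : rel 'I_n)
    (w : 'I_n -> 'I_n -> R) (H : 'M[R]_n) (s r : 'I_n) (t0 h l1 ln : R) :
  weighted_graph e w ->
  connected_graph e ->
  (H = adjacency_mx e w \/ H = laplacian_mx e w) ->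
  fidelity H s r t0 = 1 ->
  eigenvalue H l1 -> eigenvalue H ln ->
  (forall a : R, eigenvalue H a -> l1 <= a <= ln) ->
  `|h| * (ln - l1) < pi ->
  fidelity H s r (t0 + h) >= 4^-1 * Normc.normc (expi (h * l1) + expi (h * ln))%C ^+ 2.
Proof. exact: main_aux. Qed.
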